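(* Let $\mathbb{X}$ be a Banach space, $\varphi:\mathbb{X}\to\mathbb{R}\cup\{+\infty\}$ a proper lower semicontinuous function, $\mathbf{S}_\varphi:=\{x:\varphi(x)\le0\}$, $\tau>0$ and $x\in\mathbf{S}_\varphi$. Then $$\mathbf{e}\big(\{h\in\mathbb{X}:\varphi'_H(x;h)\le1\},\ \mathbf{T}^{\mathbf B}(\mathbf{S}_\varphi,x)\big)\le\tau$$ holds if and only if $$\mathbf{d}\big(h,\mathbf{T}^{\mathbf B}(\mathbf{S}_\varphi,x)\big)\le\tau\max\{\varphi'_H(x;h),0\}\quad\text{for all }h\in\mathbb{X}.$$
   Context: $\mathbf{d}(x,D):=\inf\{\|x-y\|:y\in D\}$. Excess: $\mathbf{e}(C,D):=\sup_{x\in C}\mathbf{d}(x,D)$, with $\mathbf{e}(\emptyset,D)=0$ if $D\ne\emptyset$ and $=\infty$ otherwise. $\varphi'_H(x;h):=\liminf_{t\to0^+,\,h'\to h}\frac{\varphi(x+th')-\varphi(x)}{t}$. Bouligand tangent cone $\mathbf{T}^{\mathbf B}(C,c)$: the set of all $v$ such that there exist $v_n\to v$, $t_n\downarrow0$ with $c+t_nv_n\in C$ for all $n$. *)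

(* Defs.v *)
From HB Require Import structures.
From mathcomp Require Import all_boot all_order all_algebra.
From mathcomp Require Import all_classical all_reals all_analysis.
Set Implicit Arguments. Unset Strict Implicit. Unset Printing Implicit Defensive.
Import Order.TTheory GRing.Theory Num.Theory.
Import numFieldNormedType.Exports.
Local Open Scope classical_set_scope.
Local Open Scope ring_scope.

Section defs.
Context {R : realType} {V : normedModType R}.
Local Open Scope ereal_scope.

(* d(x,D) := inf { ||x - y|| : y in D }  (= +oo when D is empty) *)
Definition dist_set (x : V) (D : set V) : \bar R :=
  ereal_inf [set (`|x - y|%R)%:E | y in D].

Definition excess (C D : set V) : \bar R :=
  if pselect (C = set0) then (if pselect (D = set0) then +oo else 0)
  else ereal_sup [set dist_set x D | x in C].

Definition hadamard_dd (phi : V -> \bar R) (x h : V) : \bar R :=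
  limf_einf (fun p : R * V => (phi (x + p.1 *: p.2)%R - phi x) * (p.1^-1)%:E)
            (filter_prod (0%R^'+) (nbhs h)).

Definition bouligand_cone (C : set V) (c : V) : set V :=
  [set v | exists (vn : nat -> V) (tn : nat -> R),
      [/\ vn @ \oo --> v, tn @ \oo --> 0%R, (forall n, (0 < tn n)%R)
        & forall n, C (c + tn n *: vn n)%R]].

Definition sublevel0 (phi : V -> \bar R) : set V := [set x | phi x <= 0].

Definition proper_fun (phi : V -> \bar R) : Prop :=
  (exists x, phi x < +oo) /\ (forall x, phi x != -oo).
End defs.

(* Main.v *)
Require Import Defs.
From HB Require Import structures.
From mathcomp Require Import all_boot all_order all_algebra.
From mathcomp Require Import all_classical all_reals all_analysis.
Import Order.TTheory GRing.Theory Num.Theory.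
Import numFieldNormedType.Exports.
Local Open Scope classical_set_scope.
Local Open Scope ring_scope.


Section S.
Variables (R : realType) (X : normedModType R).

Lemma right_scale (mu : R) (A : set R) : 0 < mu -> (0:R)^'+ A -> (0:R)^'+ [set s | A (s / mu)].
Proof.
move=> mu0 FA.
have c := @cvgMr_tmp R R (nbhs (0:R)) _ (fun s => s) 0 mu^-1 cvg_id.
rewrite mul0r in c.
have := c (nbhs_filter _) _ FA.
rewrite /at_right /within /= => H.
apply: (@filterS _ (nbhs (0:R)) _ (fun s => 0 < s / mu -> A (s / mu))) H.
by move=> s /= H1 s0; apply: H1; rewrite divr_gt0.
Qed.

Lemma scale_nbhs (mu : R) (h : X) (B : set X) : nbhs (mu *: h) B -> nbhs h [set k | B (mu *: k)].
Proof.
move=> FB.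
have c := @cvgZl_tmp R X X (nbhs h) _ mu id h cvg_id.
exact: c (nbhs_filter _) _ FB.
Qed.

Lemma cone_scale (C : set X) (c v : X) (mu : R) : 0 < mu ->
  bouligand_cone C c v -> bouligand_cone C c (mu *: v).
Proof.
move=> mu0 [vn [tn [cv ct tp Cn]]].
exists (fun n => mu *: vn n), (fun n => tn n / mu); split.
- exact: cvgZl_tmp.
- by rewrite -(mul0r mu^-1); apply: cvgMr_tmp.
- by move=> n; rewrite divr_gt0.
- by move=> n; rewrite scalerA divfK ?gt_eqF.
Qed.

Local Open Scope ereal_scope.

Lemma dist_scale (D : set X) (k : X) (mu : R) : (0 < mu)%R ->
  (forall y, D y -> D (mu *: y)) ->
  dist_set (mu *: k) D <= mu%:E * dist_set k D.
Proof.
move=> mu0 DS; rewrite -lee_pdivrMl//.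
apply: le_ereal_inf_tmp => _ [y Dy <-].
rewrite lee_pdivrMl//; apply: ge_ereal_inf.
exists (`|mu *: k - mu *: y|%R%:E); first by exists (mu *: y) => //; exact: DS.
by rewrite -scalerBr normrZ gtr0_norm.
Qed.

Lemma excess_le (L D : set X) (k : X) (t : \bar R) : excess L D <= t -> L k -> dist_set k D <= t.
Proof.
rewrite /excess; destruct (pselect (L = set0)) as [L0|L0].
  by move=> _ Lk; move: Lk; rewrite L0.
by move=> H Lk; apply: le_trans H; apply: ereal_sup_ubound; exists k.
Qed.

Lemma hdd_scale (phi : X -> \bar R) (x h : X) (mu : R) : (0 < mu)%R ->
  hadamard_dd phi x (mu *: h) <= mu%:E * hadamard_dd phi x h.
Proof.
move=> mu0; rewrite /hadamard_dd !limf_einfE.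
apply: ge_ereal_sup => _ [W FW <-].
rewrite -lee_pdivrMl//.
set g := (fun p : R * X => (phi (x + p.1 *: p.2)%R - phi x) * (p.1^-1)%:E).
pose W' := [set p : R * X | W (p.1 / mu, mu *: p.2)%R].
apply: (@le_trans _ _ (ereal_inf (g @` W'))); last first.
  apply: ereal_sup_ubound; exists W' => //.
  case: FW => -[A B] /= [FA FB] AB.
  exists ([set s | A (s / mu)%R], [set k | B (mu *: k)]).
    by split; [exact: right_scale | exact: scale_nbhs].
  by move=> [s k] /= [As Bk]; apply: AB.
apply: le_ereal_inf_tmp => _ [p W'p <-].
rewrite lee_pdivrMl//; apply: ge_ereal_inf.
exists (g (p.1 / mu, mu *: p.2)%R); first by exists (p.1 / mu, mu *: p.2)%R.
rewrite /g /= scalerA divfK ?gt_eqF// invfM invrK.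
by rewrite EFinM muleA [_ * mu%:E]muleC muleA.
Qed.
End S.

Local Open Scope ereal_scope.

Theorem proposition4p1 (R : realType) (X : completeNormedModType R)
  (phi : X -> \bar R) (tau : R) (x : X) :
  proper_fun phi -> lower_semicontinuous phi ->
  (0 < tau)%R -> sublevel0 phi x ->
  excess [set h | hadamard_dd phi x h <= 1] (bouligand_cone (sublevel0 phi) x)
    <= tau%:E
  <-> (forall h : X, dist_set h (bouligand_cone (sublevel0 phi) x)
        <= tau%:E * maxe (hadamard_dd phi x h) 0).
Proof.
move=> _ _ tau0 Sx.
set T := bouligand_cone (sublevel0 phi) x.
set L := [set h | hadamard_dd phi x h <= 1].
have Tsc : forall mu y, (0 < mu)%R -> T y -> T (mu *: y).
  by move=> mu y mu0 Ty; exact: cone_scale.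
have T0 : T 0%R.
  exists (fun _ => 0%R), (fun n => harmonic n); split.
  - exact: cvg_cst.
  - exact: cvg_harmonic.
  - by move=> n; exact: harmonic_gt0.
  - by move=> n; rewrite scaler0 addr0.
have max0 : forall a : \bar R, 0 <= tau%:E * maxe a 0.
  by move=> a; apply: mule_ge0; [rewrite lee_fin ltW | rewrite le_max lexx orbT].
split.
- move=> H h.
  have dLe : forall k, L k -> dist_set k T <= tau%:E by move=> k; exact: excess_le H.
  have d0 : hadamard_dd phi x h <= 0 -> dist_set h T <= 0.
    move=> fh0; apply/lee_addgt0Pr => e e0; rewrite add0e.
    pose lam := (tau / e)%R.
    have lam0 : (0 < lam)%R by rewrite divr_gt0.
    have -> : h = lam^-1 *: (lam *: h) by rewrite scalerA mulVf ?gt_eqF// scale1r.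
    have lamV0 : (0 < lam^-1)%R by rewrite invr_gt0.
    apply: le_trans (@dist_scale _ _ T (lam *: h) lam^-1 lamV0 (fun y => Tsc _ y lamV0)) _.
    have : dist_set (lam *: h) T <= tau%:E.
      apply: dLe; rewrite /L /=; apply: le_trans (hdd_scale _ _ _ _ _ _ lam0) _.
      by apply: le_trans (mule_ge0_le0 _ fh0) lee01; rewrite lee_fin ltW.
    move=> /(lee_wpmul2l (x:=lam^-1%:E)); rewrite lee_fin invr_ge0 ltW// => /(_ isT).
    move=> /le_trans; apply; rewrite -EFinM lee_fin /lam invf_div divfK ?gt_eqF//.
  case E: (hadamard_dd phi x h) => [r| |].
  + case: (ltrP 0 r) => r0; last first.
      by apply: le_trans (max0 _); apply: d0; rewrite E lee_fin.
    have -> : h = r *: (r^-1 *: h) by rewrite scalerA mulfV ?gt_eqF// scale1r.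
    apply: le_trans (@dist_scale _ _ T (r^-1 *: h) r r0 (fun y => Tsc _ y r0)) _.
    have : dist_set (r^-1 *: h) T <= tau%:E.
      apply: dLe; rewrite /L /=; have rV0 : (0 < r^-1)%R by rewrite invr_gt0.
      apply: le_trans (hdd_scale _ _ _ _ _ _ rV0) _.
      by rewrite E -EFinM mulVf ?gt_eqF.
    move=> /(lee_wpmul2l (x:=r%:E)); rewrite lee_fin ltW// => /(_ isT).
    move=> /le_trans; apply; rewrite muleC; apply: lee_wpmul2l; first by rewrite lee_fin ltW.
    by rewrite le_max lexx.
  + by rewrite maxye muleC gt0_mulye ?lte_fin// leey.
  + by apply: le_trans (max0 _); apply: d0; rewrite E leNye.
- move=> H; rewrite /excess.
  destruct (pselect (L = set0)) as [L0|L0].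
    destruct (pselect (T = set0)) as [T00|T00]; last by rewrite lee_fin ltW.
    by exfalso; move: T0; rewrite T00.
  apply: ge_ereal_sup => _ [k Lk <-]; apply: le_trans (H k) _.
  rewrite -[X in _ <= X]mule1; apply: lee_wpmul2l; first by rewrite lee_fin ltW.
  by rewrite ge_max Lk lee01.
Qed.
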